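(* Let $\Sigma$ be an alphabet, $n\ge1$, $L\ge 1$, and $B$ a fixed integer. Let $h_1:\Sigma\to[0,2^L)$ be a random function whose values $h_1(c)$, $c\in\Sigma$, are mutually independent and uniformly distributed on $[0,2^L)$, and define $h(x_1,\dots,x_n)=\left(\sum_{i=1}^n B^{n-i}h_1(x_i)\right)\bmod 2^L$. Then: (i) if $n$ is even and $B$ is odd, $h$ is not uniform (there exist an $n$-gram $x$ and a value $y$ with $P(h(x)=y)\neq 2^{-L}$); (ii) if $B$ is even (and $n\ge1$ arbitrary), or if $B$ and $n$ are both odd, $h$ is uniform: $P(h(x)=y)=2^{-L}$ for every $n$-gram $x$ and every $y\in[0,2^L)$; (iii) if $n\ge 2$ and $|\Sigma|\ge 2$, then for every $B$ there exist distinct $n$-grams $w_1,w_2$ with $P(h(w_1)=h(w_2))>2^{-L}$; in particular $h$ is neither pairwise independent nor 2-universal.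
   Context: An $n$-gram is an element of $\Sigma^n$. A random hash function $h:\Sigma^n\to[0,2^L)$ is pairwise independent if $P(h(x_1)=y\wedge h(x_2)=z)=4^{-L}$ for all distinct $n$-grams $x_1,x_2$ and all $y,z$; it is 2-universal if $P(h(x_1)=h(x_2))\le 2^{-L}$ for all distinct $x_1,x_2$. *)

(* Defs.v *)
(* Probability over the uniform random function
   h1 : Sigma -> [0,2^L) is modelled by counting over the finite type
   {ffun Sigma -> 'I_(2^L)} (all such functions equally likely, which is
   exactly "values mutually independent and uniform"). *)
From HB Require Import structures.
From mathcomp Require Import all_boot all_order all_algebra.
Set Implicit Arguments. Unset Strict Implicit. Unset Printing Implicit Defensive.
Import Order.TTheory GRing.Theory Num.Theory.
Local Open Scope ring_scope.

Definition hfun (Sigma : finType) (L : nat) := {ffun Sigma -> 'I_(2 ^ L)}.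

Definition prob (Sigma : finType) (L : nat) (E : pred (hfun Sigma L)) : rat :=
  (#|E|%:R / #|{: hfun Sigma L}|%:R)%R.

(* h(x_1..x_n) = (sum_{i=1}^n B^(n-i) h1(x_i)) mod 2^L ; with 0-based i : 'I_n
   the exponent n - i becomes n - (i+1). Value is an integer in [0,2^L). *)
Definition rhash (Sigma : finType) (L n : nat) (B : int) (h1 : hfun Sigma L)
  (x : n.-tuple Sigma) : int :=
  ((\sum_(i < n) B ^+ (n - i.+1) * ((h1 (tnth x i) : nat)%:Z)) %% (2 ^ L)%:Z)%Z.

Definition pairwise_indep (Sigma : finType) (L n : nat)
  (H : hfun Sigma L -> n.-tuple Sigma -> int) : Prop :=
  forall (x1 x2 : n.-tuple Sigma), x1 != x2 -> forall (y z : 'I_(2 ^ L)),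
    prob [pred h1 : hfun Sigma L | (H h1 x1 == (y : nat)%:Z) && (H h1 x2 == (z : nat)%:Z)]
    = (((2 ^ L)%:R)^-2)%R.

Definition universal2 (Sigma : finType) (L n : nat)
  (H : hfun Sigma L -> n.-tuple Sigma -> int) : Prop :=
  forall (x1 x2 : n.-tuple Sigma), x1 != x2 ->
    (prob [pred h1 : hfun Sigma L | H h1 x1 == H h1 x2] <= ((2 ^ L)%:R)^-1)%R.

(* Main.v *)
Require Import Defs.
From HB Require Import structures.
From mathcomp Require Import all_boot all_order all_algebra.
Import Order.TTheory GRing.Theory Num.Theory.
Local Open Scope ring_scope.

Lemma fiber_card (T : finType) (m : nat) (f : T -> 'I_m) :
  (forall y y' : 'I_m, exists phi : T -> T, injective phi /\
      forall t, f t = y -> f (phi t) = y') ->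
  forall y : 'I_m, (#|[pred t | f t == y]| * m = #|T|)%N.
Proof.
move=> H.
have le : forall y y', (#|[pred t | f t == y]| <= #|[pred t | f t == y']|)%N.
  move=> y y'; have [phi [inj hphi]] := H y y'.
  rewrite -(card_imset _ inj); apply: subset_leq_card.
  apply/subsetP => z /imsetP [t ht ->]; rewrite inE /=.
  by rewrite inE /= in ht; apply/eqP; apply: hphi; apply/eqP.
move=> y; symmetry.
rewrite -[#|T|]sum1_card (partition_big f xpredT) //=.
rewrite (eq_bigr (fun _ => #|[pred t | f t == y]|)); last first.
  move=> j _; rewrite sum1dep_card; apply/eqP; rewrite eqn_leq.
  have e : #|[set x | f x == j]| = #|[pred t | f t == j]|.
    by apply: eq_card => t; rewrite !inE.
  by rewrite e !le.
by rewrite sum_nat_const card_ord mulnC.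
Qed.

Lemma pow2_gt0 (L : nat) : (0 < 2 ^ L)%N.
Proof. by rewrite expn_gt0. Qed.

Lemma m_neq0 (L : nat) : (2 ^ L)%:Z != 0.
Proof. by rewrite -lt0n pow2_gt0. Qed.

Lemma toI_lt (L : nat) (z : int) : (`|(z %% (2 ^ L)%:Z)%Z| < 2 ^ L)%N.
Proof.
rewrite -ltz_nat gez0_abs ?modz_ge0 ?m_neq0 //.
by apply: ltz_pmod; rewrite ltz_nat pow2_gt0.
Qed.

Definition toI (L : nat) (z : int) : 'I_(2 ^ L) := Ordinal (toI_lt L z).

Lemma toI_val (L : nat) (z : int) : ((toI L z : nat)%:Z = z %% (2 ^ L)%:Z)%Z.
Proof. by rewrite /= gez0_abs ?modz_ge0 ?m_neq0. Qed.

Lemma toI_eq (L : nat) (z : int) (y : 'I_(2 ^ L)) :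
  (toI L z == y) = ((z %% (2 ^ L)%:Z)%Z == (y : nat)%:Z).
Proof.
apply/eqP/eqP => [<-|H]; first by rewrite toI_val.
by apply: val_inj; rewrite /= H absz_nat.
Qed.

Lemma prob_of (T : finType) (m a : nat) : (a * m = #|T|)%N -> (0 < #|T|)%N ->
  (a%:R / #|T|%:R = (m%:R)^-1 :> rat).
Proof.
move=> <- Hp; have Ha : a%:R != 0 :> rat by rewrite pnatr_eq0 -lt0n; move: Hp; rewrite muln_gt0 => /andP[].
by rewrite natrM invfM mulrA divff // mul1r.
Qed.

Lemma sum_mod (n : nat) (a b c : 'I_n -> int) (d : int) :
  (forall i, b i %% d = c i %% d)%Z ->
  ((\sum_(i < n) a i * b i) %% d = (\sum_(i < n) a i * c i) %% d)%Z.
Proof.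
move=> H; elim/big_rec2: _ => // i y1 y2 _ K.
rewrite -modzDm K -[in RHS]modzDm; congr ((_ + _) %% _)%Z.
by rewrite -modzMmr H modzMmr.
Qed.

Definition Gs (B : int) (n : nat) : int := \sum_(i < n) B ^+ (n - i.+1).

Lemma GsS (B : int) (n : nat) : Gs B n.+1 = B * Gs B n + 1.
Proof.
rewrite /Gs big_ord_recr /= subnn expr0 mulr_sumr; congr (_ + _).
apply: eq_bigr => i _ /=; rewrite -exprS; congr (_ ^+ _).
by rewrite subSS subnSK.
Qed.

Lemma dvd2_succ (x : int) : ((2 %| x + 1) = ~~ (2 %| x))%Z.
Proof.
have ch := pchar_Fp (isT : prime 2).
rewrite !(dvdz_pcharf ch) intrD.
move: (x%:~R) => v; by case: v => [[|[|]]] //= ?.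
Qed.

Lemma Gs_even (B : int) (n : nat) : (2 %| B)%Z -> (0 < n)%N -> ~~ (2 %| Gs B n)%Z.
Proof.
move=> HB; case: n => // n _; rewrite GsS dvd2_succ.
by rewrite negbK dvdz_mulr.
Qed.

Lemma Gs_odd (B : int) (n : nat) : ~~ (2 %| B)%Z -> (2 %| Gs B n)%Z = ~~ odd n.
Proof.
move=> HB; have cop : coprimez 2 B by rewrite coprimezE /= coprime2n; move: HB; rewrite dvdzE dvdn2 negbK.
elim: n => [|n IH]; first by rewrite /Gs big_ord0 dvdz0.
by rewrite GsS dvd2_succ mulrC (Gauss_dvdzl _ cop) IH /= negbK.
Qed.

Lemma dvd2_mod (L : nat) (x : int) : (0 < L)%N ->
  ((2 %| x %% (2 ^ L)%:Z) = (2 %| x))%Z.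
Proof.
move=> HL.
have h2 : (2 %| (2 ^ L)%:Z)%Z.
  rewrite dvdzE /=; case: L HL => // L _; by rewrite expnS dvdn_mulr.
have -> : (2 %| x)%Z = (2 %| (divz x (2^L)%:Z) * (2^L)%:Z + (modz x (2^L)%:Z))%Z by rewrite -divz_eq.
by rewrite [X in _ = X]rpredDl //; apply: dvdz_mull.
Qed.

Definition addm (L t : nat) (v : 'I_(2 ^ L)) : 'I_(2 ^ L) :=
  Ordinal (ltn_pmod (v + t) (pow2_gt0 L)).

Lemma addm_inj (L t : nat) : injective (addm L t).
Proof.
move=> v w /(congr1 val) /= /eqP; rewrite eqn_modDr !modn_small //.
by move/eqP/val_inj.
Qed.

Lemma addm_z (L t : nat) (v : 'I_(2 ^ L)) :
  ((addm L t v : nat)%:Z = (v%:Z + t%:Z) %% (2 ^ L)%:Z)%Z.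
Proof. by rewrite /= -modz_nat PoszD. Qed.

Definition shiftall (Sigma : finType) (L t : nat) (h1 : hfun Sigma L) : hfun Sigma L :=
  [ffun s => addm L t (h1 s)].
Arguments shiftall {Sigma L}.

Lemma shiftall_inj (Sigma : finType) (L t : nat) : injective (@shiftall Sigma L t).
Proof.
move=> h h' E; apply/ffunP => s.
by have := congr1 (fun f : hfun Sigma L => f s) E; rewrite !ffunE => /addm_inj.
Qed.

Definition Ssum (Sigma : finType) (L n : nat) (B : int) (h1 : hfun Sigma L)
  (x : n.-tuple Sigma) : int :=
  \sum_(i < n) B ^+ (n - i.+1) * ((h1 (tnth x i) : nat)%:Z).
Arguments Ssum {Sigma L n}.

Lemma rhashE (Sigma : finType) (L n : nat) (B : int) (h1 : hfun Sigma L) (x : n.-tuple Sigma) :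
  rhash B h1 x = (Ssum B h1 x %% (2 ^ L)%:Z)%Z.
Proof. by []. Qed.

Lemma rhash_shiftall (Sigma : finType) (L n t : nat) (B : int) (h1 : hfun Sigma L) (x : n.-tuple Sigma) :
  rhash B (shiftall t h1) x = ((rhash B h1 x + Gs B n * t%:Z) %% (2 ^ L)%:Z)%Z.
Proof.
rewrite !rhashE /Ssum modzDml.
rewrite (@sum_mod n _ _ (fun i => (h1 (tnth x i) : nat)%:Z + t%:Z)); last first.
  by move=> i; rewrite ffunE addm_z modz_mod.
congr (_ %% _)%Z; rewrite /Gs mulr_suml -big_split /=.
by apply: eq_bigr => i _; rewrite mulrDr.
Qed.

Lemma toI_mod (L : nat) (z z' : int) :
  (z %% (2 ^ L)%:Z = z' %% (2 ^ L)%:Z)%Z -> toI L z = toI L z'.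
Proof. by move=> H; apply: val_inj; rewrite /= H. Qed.

Lemma toI_eqI (L : nat) (z : int) (y : 'I_(2 ^ L)) :
  (z %% (2 ^ L)%:Z = (y : nat)%:Z)%Z -> toI L z = y.
Proof. by move=> H; apply/eqP; rewrite toI_eq H. Qed.

Lemma card_hfun_gt0 (Sigma : finType) (L : nat) : (0 < #|{: hfun Sigma L}|)%N.
Proof. by rewrite card_ffun card_ord expn_gt0 pow2_gt0. Qed.

Lemma one_lt (L : nat) : (0 < L)%N -> (1 < 2 ^ L)%N.
Proof. by move=> hL; rewrite -[1%N]/(2 ^ 0)%N ltn_exp2l. Qed.

Lemma uniform_ii (Sigma : finType) (n L : nat) (B : int) : (0 < L)%N ->
  ~~ (2 %| Gs B n)%Z -> forall (x : n.-tuple Sigma) (y : 'I_(2 ^ L)),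
  prob [pred h1 : hfun Sigma L | rhash B h1 x == (y : nat)%:Z] = (((2 ^ L)%:R)^-1)%R.
Proof.
move=> hL hG x y.
set m := (2 ^ L)%:Z.
have m1 : (1 %% m = 1)%Z by rewrite modz_small // ltz_nat one_lt.
have [u Hu] : exists u, ((u * Gs B n) %% m = 1)%Z.
  have [u [v Huv]] := Bezoutz (Gs B n) m.
  have cop : coprimez (Gs B n) m.
    rewrite /m -natz natrX coprimez_pexpr // coprimezE /= coprimen2.
    by move: hG; rewrite dvdzE dvdn2 negbK.
  exists u; rewrite -(modzMDl v) addrC Huv.
  by move/eqP: cop => ->.
set f := fun h1 : hfun Sigma L => toI L (Ssum B h1 x).
have E : prob [pred h1 : hfun Sigma L | rhash B h1 x == (y : nat)%:Z]
  = #|[pred h | f h == y]|%:R / #|{: hfun Sigma L}|%:R.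
  by rewrite /prob; congr (_%:R / _); apply: eq_card => h; rewrite !inE toI_eq.
rewrite E; apply: prob_of; last exact: card_hfun_gt0.
apply: fiber_card => y1 y2.
exists (shiftall `|((u * (y2%:Z - y1%:Z)) %% m)%Z| ); split; first exact: shiftall_inj.
move=> h Hh; apply: toI_eqI; rewrite -rhashE rhash_shiftall.
have -> : rhash B h x = y1 by rewrite rhashE -toI_val /f in Hh *; rewrite Hh.
rewrite gez0_abs ?modz_ge0 ?m_neq0 // -/m.
rewrite -modzDmr modzMmr modzDmr.
rewrite mulrA (mulrC (Gs B n)) -modzDmr -modzMml Hu mul1r modzDmr addrC subrK modz_small //.
by rewrite ltz_nat ltn_ord andbT.
Qed.

Lemma prob0 (Sigma : finType) (L : nat) (E : pred (hfun Sigma L)) :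
  (forall h, ~~ E h) -> prob E = 0.
Proof.
move=> H; rewrite /prob (eq_card0 (A := E)) ?mul0r // => h.
by rewrite inE /= -topredE /=; apply/negbTE.
Qed.

Lemma part_i (Sigma : finType) (n L : nat) (B : int) :
  (0 < #|Sigma|)%N -> (0 < L)%N -> ~~ odd n -> ~~ (2 %| B)%Z ->
  exists (x : n.-tuple Sigma) (y : 'I_(2 ^ L)),
    prob [pred h1 : hfun Sigma L | rhash B h1 x == (y : nat)%:Z]
      != (((2 ^ L)%:R)^-1)%R.
Proof.
move=> /card_gt0P [c _] hL hn hB.
exists [tuple of nseq n c], (Ordinal (one_lt _ hL)).
rewrite prob0; first by rewrite eq_sym invr_eq0 pnatr_eq0 -lt0n pow2_gt0.
move=> h; rewrite inE /=; apply/negP => /eqP H.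
have : (2 %| rhash B h [tuple of nseq n c])%Z.
  rewrite rhashE dvd2_mod // /Ssum.
  rewrite (eq_bigr (fun i : 'I_n => B ^+ (n - i.+1) * (h c : nat)%:Z)); last first.
    by move=> i _; rewrite tnth_nseq.
  by rewrite -mulr_suml -/(Gs B n) dvdz_mulr // Gs_odd.
by rewrite H.
Qed.

Definition wa (Sigma : finType) (k : nat) (a : Sigma) : k.+2.-tuple Sigma :=
  [tuple a | i < k.+2].
Arguments wa {Sigma}.
Definition wb (Sigma : finType) (k : nat) (a b : Sigma) (o : bool) : k.+2.-tuple Sigma :=
  [tuple (if (i : nat) == 0%N then b else if ((i : nat) == 1%N) && o then b else a) | i < k.+2].
Arguments wb {Sigma}.

Lemma diff_sum (Sigma : finType) (L k : nat) (B : int) (h : hfun Sigma L) (a b : Sigma) (o : bool) :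
  Ssum B h (wa k a) = Ssum B h (wb k a b o)
    + (B ^+ k.+1 + (if o then B ^+ k else 0)) * ((h a : nat)%:Z - (h b : nat)%:Z).
Proof.
rewrite /Ssum !big_ord_recl !tnth_mktuple /=.
set R := \sum_(i < k) _.
have -> : \sum_(i < k) B ^+ (k.+2 - (lift ord0 (lift ord0 i)).+1) *
     (h (tnth (wb k a b o) (lift ord0 (lift ord0 i))) : nat)%:Z = R.
  by apply: eq_bigr => i _; rewrite !tnth_mktuple.
have e1 : (k.+2 - 1 = k.+1)%N by rewrite subn1.
have e2 : (k.+2 - (bump 0 0).+1 = k)%N by rewrite /bump /= subSS subSS subn0.
rewrite e1 e2; case: o.
  by rewrite mulrDl !mulrBr [RHS]addrC addrACA subrKA addrNK.
by rewrite addr0 mulrBr [RHS]addrC subrKA.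
Qed.

Definition Dc (B : int) (k : nat) : int :=
  B ^+ k.+1 + (if ~~ (2 %| B)%Z then B ^+ k else 0).

Lemma Dc_even (B : int) (k : nat) : (2 %| Dc B k)%Z.
Proof.
rewrite /Dc; case: ifP => hB.
  rewrite exprS mulrC -{2}(mulr1 (B ^+ k)) -mulrDr; apply: dvdz_mull.
  by rewrite dvd2_succ.
by rewrite addr0 exprS dvdz_mulr // -[B \in _]negbK hB.
Qed.

Lemma half_lt (L : nat) : (0 < L)%N -> (2 ^ L.-1 < 2 ^ L)%N.
Proof. by move=> hL; rewrite ltn_exp2l // prednK. Qed.

Lemma mod_key (L : nat) (D z : int) : (0 < L)%N -> (2 %| D)%Z ->
  ((z %% (2 ^ L)%:Z = 0) \/ (z %% (2 ^ L)%:Z = (2 ^ L.-1)%:Z))%Z ->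
  ((D * z) %% (2 ^ L)%:Z = 0)%Z.
Proof.
move=> hL /dvdzP [D' ->] H.
rewrite (divz_eq z (2 ^ L)%:Z) mulrDr mulrA modzMDl.
case: H => ->; first by rewrite mulr0 mod0z.
have -> : (D' * 2 * (2 ^ L.-1)%:Z = D' * (2 ^ L)%:Z)%R.
  by rewrite -mulrA -PoszM -expnS prednK.
exact: modzMl.
Qed.

Definition shifta (Sigma : finType) (L t : nat) (a : Sigma) (h : hfun Sigma L) : hfun Sigma L :=
  [ffun s => if s == a then addm L t (h s) else h s].
Arguments shifta {Sigma L}.

Lemma shifta_inj (Sigma : finType) (L t : nat) (a : Sigma) : injective (@shifta Sigma L t a).
Proof.
move=> h h' E; apply/ffunP => s.
have := congr1 (fun f : hfun Sigma L => f s) E; rewrite !ffunE.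
by case: (s == a) => // /addm_inj.
Qed.

Definition fd (Sigma : finType) (L : nat) (a b : Sigma) (h : hfun Sigma L) : 'I_(2 ^ L) :=
  toI L ((h a : nat)%:Z - (h b : nat)%:Z).
Arguments fd {Sigma L}.

Lemma fd_fiber (Sigma : finType) (L : nat) (a b : Sigma) : a != b ->
  forall y : 'I_(2 ^ L), (#|[pred h : hfun Sigma L | fd a b h == y]| * 2 ^ L = #|{: hfun Sigma L}|)%N.
Proof.
move=> ab; apply: fiber_card => y1 y2.
set m := (2 ^ L)%:Z.
exists (shifta `|(((y2 : nat)%:Z - (y1 : nat)%:Z) %% m)%Z| a); split; first exact: shifta_inj.
move=> h Hh; apply: toI_eqI.
rewrite /fd !ffunE eqxx (eq_sym b a) (negbTE ab) addm_z.
rewrite gez0_abs ?modz_ge0 ?m_neq0 // -/m.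
rewrite (modzDml ((h a : nat)%:Z + _)) addrAC.
rewrite -(modzDml ((h a : nat)%:Z - (h b : nat)%:Z)).
have -> : (((h a : nat)%:Z - (h b : nat)%:Z) %% m)%Z = (y1 : nat)%:Z.
  by rewrite -toI_val; rewrite /fd in Hh; rewrite Hh.
rewrite modzDmr addrC addrNK modz_small //.
by rewrite ltz_nat ltn_ord andbT.
Qed.

Lemma toI_valE (L : nat) (z : int) (y : 'I_(2 ^ L)) :
  toI L z = y -> (z %% (2 ^ L)%:Z = (y : nat)%:Z)%Z.
Proof. by move<-; rewrite toI_val. Qed.

Lemma collision (Sigma : finType) (L k : nat) (B : int) (a b : Sigma) :
  (0 < L)%N -> a != b ->
  (((2 ^ L)%:R)^-1 < prob [pred h1 : hfun Sigma L |
     rhash B h1 (wa k a) == rhash B h1 (wb k a b (~~ (2 %| B)%Z))])%R.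
Proof.
move=> hL ab.
set E := [pred h1 : hfun Sigma L | _].
set z0 : 'I_(2 ^ L) := Ordinal (pow2_gt0 L).
set zh : 'I_(2 ^ L) := Ordinal (half_lt _ hL).
set A := [pred h : hfun Sigma L | fd a b h == z0].
set C := [pred h : hfun Sigma L | fd a b h == zh].
have sub : [predU A & C] \subset E.
  apply/subsetP => h; rewrite !inE /= !rhashE (diff_sum Sigma L k B h a b (~~ (2 %| B)%Z)) -/(Dc B k) => H.
  rewrite -modzDm (mod_key L _ _ hL (Dc_even B k)) ?addr0 ?modz_mod //.
  by case/orP: H => /eqP /toI_valE ->; [left|right].
have I0 : #|[predI A & C]| = 0%N.
  apply: eq_card0 => h; rewrite !inE /=.
  apply/negbTE/negP => /andP [/eqP -> /eqP /(congr1 val) /=] /eqP; apply/negP.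
  by rewrite eq_sym -lt0n expn_gt0.
have hA := fd_fiber Sigma L a b ab z0; have hC := fd_fiber Sigma L a b ab zh.
have le : (2 * #|{: hfun Sigma L}| <= #|E| * 2 ^ L)%N.
  rewrite mul2n -addnn -{1}hA -hC -mulnDl leq_mul2r; apply/orP; right.
  apply: (leq_trans _ (subset_leq_card sub)); by rewrite -cardUI I0 addn0.
have hT := card_hfun_gt0 Sigma L.
rewrite /prob -(ltr_pM2r (_ : 0 < (#|{: hfun Sigma L}| * 2 ^ L)%:R)); last first.
  by rewrite ltr0n muln_gt0 hT pow2_gt0.
have T0 : (#|{: hfun Sigma L}|%:R != 0 :> rat) by rewrite pnatr_eq0 -lt0n.
have m0 : ((2 ^ L)%:R != 0 :> rat) by rewrite pnatr_eq0 -lt0n pow2_gt0.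
rewrite natrM mulrC -mulrA divff // mulr1 mulrA divfK // -natrM ltr_nat.
apply: leq_trans le; rewrite mul2n -addnn -{1}[#|{: hfun Sigma L}|]addn0 ltn_add2l //.
Qed.

Lemma wa_neq (Sigma : finType) (k : nat) (a b : Sigma) (o : bool) :
  a != b -> wa k a != wb k a b o.
Proof.
move=> ab; apply/eqP => E.
have := congr1 (fun w => tnth w ord0) E; rewrite !tnth_mktuple /= => ea.
by rewrite ea eqxx in ab.
Qed.

Lemma no_pair (Sigma : finType) (L k : nat) (B : int) (a b : Sigma) :
  (0 < L)%N -> a != b ->
  ~ pairwise_indep (fun (h1 : hfun Sigma L) (x : k.+2.-tuple Sigma) => rhash B h1 x).
Proof.
move=> hL ab H.
set o := ~~ (2 %| B)%Z.
have := H (wa k a) (wb k a b o) (wa_neq Sigma k a b o ab) (Ordinal (pow2_gt0 L)) (Ordinal (one_lt _ hL)).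
rewrite prob0.
  by move/eqP; rewrite eq_sym invr_eq0 expf_eq0 /= pnatr_eq0 expn_eq0.
move=> h /=; apply/negP => /andP [/eqP e1 /eqP e2].
have p1 : (2 %| Ssum B h (wa k a))%Z by rewrite -(dvd2_mod _ _ hL) -rhashE e1.
have p2 : ~~ (2 %| Ssum B h (wb k a b o))%Z by rewrite -(dvd2_mod _ _ hL) -rhashE e2.
move: p1; rewrite (diff_sum Sigma L k B h a b o) -/(Dc B k) rpredDr ?(negbTE p2) //.
by apply: dvdz_mulr; apply: Dc_even.
Qed.

Theorem mainTheorem3 (Sigma : finType) (n L : nat) (B : int)
  (hSigma : (0 < #|Sigma|)%N) (hn : (1 <= n)%N) (hL : (1 <= L)%N) :
  (* (i) n even, B odd: h is not uniform *)
  (~~ odd n -> ~~ (2 %| B)%Z ->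
     exists (x : n.-tuple Sigma) (y : 'I_(2 ^ L)),
       prob [pred h1 : hfun Sigma L | rhash B h1 x == (y : nat)%:Z]
         != (((2 ^ L)%:R)^-1)%R)
  /\
  (* (ii) B even, or B and n both odd: h is uniform *)
  ((2 %| B)%Z || (~~ (2 %| B)%Z && odd n) ->
     forall (x : n.-tuple Sigma) (y : 'I_(2 ^ L)),
       prob [pred h1 : hfun Sigma L | rhash B h1 x == (y : nat)%:Z]
         = (((2 ^ L)%:R)^-1)%R)
  /\
  (* (iii) n >= 2, |Sigma| >= 2: a pair with collision probability > 2^-L *)
  ((2 <= n)%N -> (2 <= #|Sigma|)%N ->
     (exists (w1 w2 : n.-tuple Sigma), w1 != w2 /\
        (((2 ^ L)%:R)^-1 <
           prob [pred h1 : hfun Sigma L | rhash B h1 w1 == rhash B h1 w2])%R)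
     /\ ~ pairwise_indep (fun (h1 : hfun Sigma L) (x : n.-tuple Sigma) => rhash B h1 x)
     /\ ~ universal2 (fun (h1 : hfun Sigma L) (x : n.-tuple Sigma) => rhash B h1 x)).
Proof.
split; first by move=> ho hB; apply: part_i.
split.
  move=> H; apply: uniform_ii => //.
  case/orP: H => [hB|/andP [hB ho]]; first exact: Gs_even.
  by rewrite Gs_odd // ho.
case: n hn => [|[|k]] // _ _ /card_gt1P [a [b [_ _ ab]]].
have hc := collision Sigma L k B a b hL ab.
split; first by exists (wa k a), (wb k a b (~~ (2 %| B)%Z)); split => //; exact: wa_neq.
split; first exact: (no_pair Sigma L k B a b hL ab).
move=> H; have := H _ _ (wa_neq Sigma k a b (~~ (2 %| B)%Z) ab).
by rewrite leNgt hc.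
Qed.
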